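(* Let $Q=\{\rho=0\}$ with $\rho(x_1,x_2,x_3)=x_1^2+x_2^2+x_3^2-2(x_1x_2+x_2x_3+x_3x_1)$, and $\mathcal U=\{[x]\in\mathbb{RP}^2:\rho(x)<0\}$. Then: (1) $f(a_j)=Q$ for each $a_j\in\mathcal I(f)$; (2) $f(p)=p$ for every $p\in Q\setminus\mathcal I(f)$; (3) for every $p\in\mathbb{P}^2\setminus(A_1\cup A_2\cup A_3)$, $p\in\mathcal U$ if and only if $f(p)\in\mathcal U$.
   Context: $g[x_1:x_2:x_3]=[x_1^2:x_2^2:x_3^2]$, $h[x_1:x_2:x_3]=[x_1(-x_1+x_2+x_3):x_2(x_1-x_2+x_3):x_3(x_1+x_2-x_3)]$, $f=g\circ h$. $\mathcal I(f)=\{a_1,a_2,a_3\}$ with $a_1=[0:1:1]$, $a_2=[1:0:1]$, $a_3=[1:1:0]$, and $A_i$ is the line through $\{a_1,a_2,a_3\}\setminus\{a_i\}$. For $p\in\mathcal I(f)$, $f(p)$ denotes the set of all limits $\lim f(p_j)$ with $p_j\to p$, $p_j\notin\mathcal I(f)$. ($\rho(x)<0$ is well defined on $\mathbb{RP}^2$ since $\rho$ is homogeneous of even degree; $\mathcal U$ is the open disk in $\mathbb{RP}^2$ bounded by $Q\cap\mathbb{RP}^2$, which is tangent to the lines $x_j=0$ at the points of $\mathcal I(f)$.) *)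

(* Defs.v *)
From Stdlib Require Import Reals.
Open Scope R_scope.

Record CC := mkC { Re : R; Im : R }.
Definition C0 : CC := mkC 0 0.
Definition C1 : CC := mkC 1 0.
Definition RtoC (r : R) : CC := mkC r 0.
Definition Cadd (z w : CC) : CC := mkC (Re z + Re w) (Im z + Im w).
Definition Copp (z : CC) : CC := mkC (- Re z) (- Im z).
Definition Csub (z w : CC) : CC := Cadd z (Copp w).
Definition Cmul (z w : CC) : CC :=
  mkC (Re z * Re w - Im z * Im w) (Re z * Im w + Im z * Re w).

Definition Ccv (s : nat -> CC) (z : CC) : Prop :=
  Un_cv (fun n => Re (s n)) (Re z) /\ Un_cv (fun n => Im (s n)) (Im z).

Record V3 (K : Type) := mkV { v1 : K; v2 : K; v3 : K }.
Arguments mkV {K}. Arguments v1 {K}. Arguments v2 {K}. Arguments v3 {K}.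

Definition V0 : V3 CC := mkV C0 C0 C0.
Definition Cscale (c : CC) (x : V3 CC) : V3 CC :=
  mkV (Cmul c (v1 x)) (Cmul c (v2 x)) (Cmul c (v3 x)).
Definition RtoV (x : V3 R) : V3 CC := mkV (RtoC (v1 x)) (RtoC (v2 x)) (RtoC (v3 x)).

(** Points of P^2 = P^2(CC) are represented by nonzero vectors of CC^3;
    two nonzero vectors represent the same point iff they are proportional. *)
Definition proj_eq (x y : V3 CC) : Prop :=
  exists c : CC, c <> C0 /\ y = Cscale c x.

(** Convergence in P^2: [u n] -> [y] iff there are nonzero lifts converging
    to a nonzero representative of y (this is the quotient topology). *)
Definition V3cv (u : nat -> V3 CC) (y : V3 CC) : Prop :=
  Ccv (fun n => v1 (u n)) (v1 y) /\ Ccv (fun n => v2 (u n)) (v2 y) /\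
  Ccv (fun n => v3 (u n)) (v3 y).
Definition P2cv (u : nat -> V3 CC) (y : V3 CC) : Prop :=
  y <> V0 /\ (forall n, u n <> V0) /\
  exists c : nat -> CC, (forall n, c n <> C0) /\ V3cv (fun n => Cscale (c n) (u n)) y.

Definition gmap (x : V3 CC) : V3 CC :=
  mkV (Cmul (v1 x) (v1 x)) (Cmul (v2 x) (v2 x)) (Cmul (v3 x) (v3 x)).
Definition hmap (x : V3 CC) : V3 CC :=
  let x1 := v1 x in let x2 := v2 x in let x3 := v3 x in
  mkV (Cmul x1 (Cadd (Cadd (Copp x1) x2) x3))
      (Cmul x2 (Cadd (Csub x1 x2) x3))
      (Cmul x3 (Csub (Cadd x1 x2) x3)).
Definition fmap (x : V3 CC) : V3 CC := gmap (hmap x).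

Definition rhoC (x : V3 CC) : CC :=
  let x1 := v1 x in let x2 := v2 x in let x3 := v3 x in
  Csub (Cadd (Cadd (Cmul x1 x1) (Cmul x2 x2)) (Cmul x3 x3))
       (Cmul (RtoC 2) (Cadd (Cadd (Cmul x1 x2) (Cmul x2 x3)) (Cmul x3 x1))).
Definition rhoR (x : V3 R) : R :=
  let x1 := v1 x in let x2 := v2 x in let x3 := v3 x in
  x1 * x1 + x2 * x2 + x3 * x3 - 2 * (x1 * x2 + x2 * x3 + x3 * x1).

Definition inQ (p : V3 CC) : Prop := p <> V0 /\ rhoC p = C0.

(** U = {[x] in RP^2 : rho(x) < 0}, viewed inside P^2(CC): p is in U iff
    p is represented by a nonzero real vector x with rho(x) < 0. *)
Definition inU (p : V3 CC) : Prop :=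
  exists x : V3 R, x <> mkV 0 0 0 /\ proj_eq (RtoV x) p /\ rhoR x < 0.

Definition a1 : V3 CC := mkV C0 C1 C1.
Definition a2 : V3 CC := mkV C1 C0 C1.
Definition a3 : V3 CC := mkV C1 C1 C0.
Definition inI (p : V3 CC) : Prop := proj_eq a1 p \/ proj_eq a2 p \/ proj_eq a3 p.

Definition det3 (x u v : V3 CC) : CC :=
  Cadd (Csub (Cmul (v1 x) (Csub (Cmul (v2 u) (v3 v)) (Cmul (v3 u) (v2 v))))
             (Cmul (v2 x) (Csub (Cmul (v1 u) (v3 v)) (Cmul (v3 u) (v1 v)))))
       (Cmul (v3 x) (Csub (Cmul (v1 u) (v2 v)) (Cmul (v2 u) (v1 v)))).
Definition onLine (u v p : V3 CC) : Prop := det3 p u v = C0.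
Definition onA1 (p : V3 CC) : Prop := onLine a2 a3 p.
Definition onA2 (p : V3 CC) : Prop := onLine a1 a3 p.
Definition onA3 (p : V3 CC) : Prop := onLine a1 a2 p.

(** For p in I(f): f(p) = set of limits of f(p_j), p_j -> p, p_j not in I(f).
    [limit_set p y] says the point [y] belongs to f(p). *)
Definition limit_set (p y : V3 CC) : Prop :=
  exists u : nat -> V3 CC,
    (forall n, ~ inI (u n)) /\ P2cv u p /\ P2cv (fun n => fmap (u n)) y.

(* Main.v *)
Require Import Defs.
From Stdlib Require Import Reals Lra Lia Psatz Ring Field Classical.
Require Import Defs.
Open Scope R_scope.


Lemma Ceq (z w : CC) : Re z = Re w -> Im z = Im w -> z = w.
Proof. destruct z, w; simpl; intros; subst; reflexivity. Qed.

Ltac cc := intros; repeat match goal with z : CC |- _ => destruct z end;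
  apply Ceq; unfold Cadd, Cmul, Copp, Csub, C0, C1, RtoC; simpl; ring.

Lemma CC_ring : ring_theory C0 C1 Cadd Cmul Csub Copp (@eq CC).
Proof. constructor; cc. Qed.

Definition Cinv (z : CC) : CC :=
  mkC (Re z / (Re z * Re z + Im z * Im z)) (- Im z / (Re z * Re z + Im z * Im z)).
Definition Cdiv (z w : CC) := Cmul z (Cinv w).

Lemma C1_neq_C0 : C1 <> C0.
Proof. intro H. assert (Re C1 = Re C0) by (rewrite H; reflexivity). simpl in *; lra. Qed.

Lemma Cnz (z : CC) : z <> C0 -> Re z * Re z + Im z * Im z <> 0.
Proof. destruct z as [a b]; simpl; intros H E. apply H.
  assert (a = 0) by nra. assert (b = 0) by nra. subst. reflexivity. Qed.

Lemma CC_field : field_theory C0 C1 Cadd Cmul Csub Copp Cdiv Cinv (@eq CC).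
Proof. constructor.
  - exact CC_ring.
  - exact C1_neq_C0.
  - reflexivity.
  - intros p Hp. pose proof (Cnz p Hp). destruct p as [a b]; simpl in *.
    apply Ceq; unfold Cmul, C1; simpl; field; auto.
Qed.

Add Field CCfield : CC_field.

Lemma Cmul_integral (z w : CC) : Cmul z w = C0 -> z = C0 \/ w = C0.
Proof. intro H. destruct (classic (z = C0)) as [|Hz]; [left; auto|right].
  transitivity (Cmul (Cinv z) (Cmul z w)). field; auto. rewrite H; ring. Qed.


Lemma Ccv_const (z : CC) : Ccv (fun _ => z) z.
Proof. split; intros e He; exists 0%nat; intros; unfold Rdist, R_dist; rewrite Rminus_diag, Rabs_R0; lra. Qed.

Lemma Ccv_add s t a b : Ccv s a -> Ccv t b -> Ccv (fun n => Cadd (s n) (t n)) (Cadd a b).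
Proof. intros [H1 H2] [H3 H4]; split; simpl.
  apply (CV_plus (fun n => Re (s n)) (fun n => Re (t n))); auto.
  apply (CV_plus (fun n => Im (s n)) (fun n => Im (t n))); auto. Qed.

Lemma Ccv_opp s a : Ccv s a -> Ccv (fun n => Copp (s n)) (Copp a).
Proof. intros [H1 H2]; split; simpl.
  apply (CV_opp (fun n => Re (s n))); auto.
  apply (CV_opp (fun n => Im (s n))); auto. Qed.

Lemma Ccv_sub s t a b : Ccv s a -> Ccv t b -> Ccv (fun n => Csub (s n) (t n)) (Csub a b).
Proof. intros. apply Ccv_add; auto. apply Ccv_opp; auto. Qed.

Lemma Ccv_mul s t a b : Ccv s a -> Ccv t b -> Ccv (fun n => Cmul (s n) (t n)) (Cmul a b).
Proof. intros [H1 H2] [H3 H4]; split; simpl.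
  apply (CV_minus (fun n => Re (s n) * Re (t n)) (fun n => Im (s n) * Im (t n)));
  [apply (CV_mult (fun n => Re (s n)) (fun n => Re (t n)))|apply (CV_mult (fun n => Im (s n)) (fun n => Im (t n)))]; auto.
  apply (CV_plus (fun n => Re (s n) * Im (t n)) (fun n => Im (s n) * Re (t n)));
  [apply (CV_mult (fun n => Re (s n)) (fun n => Im (t n)))|apply (CV_mult (fun n => Im (s n)) (fun n => Re (t n)))]; auto.
Qed.

Lemma Ccv_unique s a b : Ccv s a -> Ccv s b -> a = b.
Proof. intros [H1 H2] [H3 H4]. apply Ceq; eapply UL_sequence; eauto. Qed.

Lemma Ccv_ext s t a : (forall n, s n = t n) -> Ccv t a -> Ccv s a.
Proof. intros E [H1 H2]; split; intros e He; [destruct (H1 e He) as [N HN]|destruct (H2 e He) as [N HN]];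
  exists N; intros; rewrite E; auto. Qed.

Lemma Ccv_lim s a b : Ccv s a -> a = b -> Ccv s b.
Proof. intros; subst; auto. Qed.

Ltac ccv := repeat first [ assumption | apply Ccv_const | apply Ccv_add | apply Ccv_sub
   | apply Ccv_mul | apply Ccv_opp ].

Lemma RtoC_add a b : RtoC (a + b) = Cadd (RtoC a) (RtoC b). Proof. cc. Qed.
Lemma RtoC_mul a b : RtoC (a * b) = Cmul (RtoC a) (RtoC b). Proof. cc. Qed.
Lemma RtoC_opp a : RtoC (- a) = Copp (RtoC a). Proof. cc. Qed.
Lemma RtoC_sub a b : RtoC (a - b) = Csub (RtoC a) (RtoC b). Proof. cc. Qed.
Lemma RtoC_0 : RtoC 0 = C0. Proof. reflexivity. Qed.
Lemma RtoC_1 : RtoC 1 = C1. Proof. reflexivity. Qed.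
Lemma RtoC_2 : RtoC 2 = Cadd C1 C1. Proof. cc. Qed.
Lemma RtoC_inj a b : RtoC a = RtoC b -> a = b.
Proof. intro H. apply (f_equal Re) in H. exact H. Qed.
Lemma RtoC_nz a : a <> 0 -> RtoC a <> C0.
Proof. intros H E. apply H. apply (f_equal Re) in E. exact E. Qed.
Lemma RtoC_inv a : a <> 0 -> Cinv (RtoC a) = RtoC (/ a).
Proof. intros. apply Ceq; unfold Cinv, RtoC; simpl; field; auto. Qed.

Lemma two_nz : Cadd C1 C1 <> C0.
Proof. rewrite <- RtoC_2. apply RtoC_nz. lra. Qed.

Lemma Cmul_nz z w : z <> C0 -> w <> C0 -> Cmul z w <> C0.
Proof. intros H1 H2 E. destruct (Cmul_integral _ _ E); auto. Qed.

Lemma Csq_zero z : Cmul z z = C0 -> z = C0.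
Proof. intro E. destruct (Cmul_integral _ _ E); auto. Qed.

Lemma Csqrt_ex (z : CC) : exists w, Cmul w w = z.
Proof.
  destruct z as [a b].
  set (r := sqrt (a * a + b * b)).
  assert (Hr0 : 0 <= a * a + b * b) by nra.
  assert (Hr : r * r = a * a + b * b) by (apply sqrt_sqrt; auto).
  assert (Hrp : 0 <= r) by apply sqrt_pos.
  assert (Ha1 : 0 <= (r + a) / 2) by nra.
  assert (Ha2 : 0 <= (r - a) / 2) by nra.
  set (X := sqrt ((r + a) / 2)). set (Y := sqrt ((r - a) / 2)).
  assert (HX : X * X = (r + a) / 2) by (apply sqrt_sqrt; auto).
  assert (HY : Y * Y = (r - a) / 2) by (apply sqrt_sqrt; auto).
  assert (HX0 : 0 <= X) by apply sqrt_pos.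
  assert (HY0 : 0 <= Y) by apply sqrt_pos.
  assert (HXY : (X * Y) * (X * Y) = (b / 2) * (b / 2)).
  { replace ((X * Y) * (X * Y)) with ((X * X) * (Y * Y)) by ring. rewrite HX, HY. nra. }
  destruct (Rle_or_lt 0 b) as [Hb|Hb].
  - exists (mkC X Y). apply Ceq; simpl.
    + nra.
    + assert (X * Y = b / 2) by (apply Rsqr_inj; unfold Rsqr; nra). nra.
  - exists (mkC X (- Y)). apply Ceq; simpl.
    + nra.
    + assert (X * Y = - (b / 2)) by (apply Rsqr_inj; unfold Rsqr; nra). nra.
Qed.

Lemma Csq_real z s : 0 < s -> Cmul z z = RtoC s -> z = RtoC (Re z).
Proof. destruct z as [a b]; intros Hs E. unfold Cmul, RtoC in E; simpl in E. injection E; intros E2 E1.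
  apply Ceq; simpl; auto. destruct (Req_dec a 0) as [->|Ha]. nra.
  assert (a * b = 0) by lra. destruct (Rmult_integral _ _ H); [contradiction|auto]. Qed.


Definition four := Cmul (Cadd C1 C1) (Cadd C1 C1).

Lemma part2 p : inQ p -> ~ inI p -> proj_eq p (fmap p).
Proof.
  intros [Hp0 Hr] HI. destruct p as [x1 x2 x3].
  unfold rhoC in Hr; simpl in Hr. rewrite RtoC_2 in Hr.
  assert (N1 : x1 <> C0).
  { intro E; subst x1. apply HI. left. exists x2. 
    assert (E : Cmul (Csub x2 x3) (Csub x2 x3) = C0) by (rewrite <- Hr; ring).
    apply Csq_zero in E. assert (x3 = x2) by (transitivity (Cadd x3 (Csub x2 x3)); [rewrite E|]; ring).
    subst x3. split.
    - intro E2; subst x2; apply Hp0; reflexivity.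
    - unfold Cscale, a1; simpl; f_equal; ring. }
  assert (N2 : x2 <> C0).
  { intro E; subst x2. apply HI. right; left. exists x1.
    assert (E : Cmul (Csub x1 x3) (Csub x1 x3) = C0) by (rewrite <- Hr; ring).
    apply Csq_zero in E. assert (x3 = x1) by (transitivity (Cadd x3 (Csub x1 x3)); [rewrite E|]; ring).
    subst x3. split.
    - intro E2; subst x1; apply Hp0; reflexivity.
    - unfold Cscale, a2; simpl; f_equal; ring. }
  assert (N3 : x3 <> C0).
  { intro E; subst x3. apply HI. right; right. exists x1.
    assert (E : Cmul (Csub x1 x2) (Csub x1 x2) = C0) by (rewrite <- Hr; ring).
    apply Csq_zero in E. assert (x2 = x1) by (transitivity (Cadd x2 (Csub x1 x2)); [rewrite E|]; ring).
    subst x2. split.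
    - intro E2; subst x1; apply Hp0; reflexivity.
    - unfold Cscale, a3; simpl; f_equal; ring. }
  set (R0 := Csub (Cadd (Cadd (Cmul x1 x1) (Cmul x2 x2)) (Cmul x3 x3))
      (Cmul (Cadd C1 C1) (Cadd (Cadd (Cmul x1 x2) (Cmul x2 x3)) (Cmul x3 x1)))) in Hr.
  exists (Cmul four (Cmul x1 (Cmul x2 x3))). split.
  - unfold four. repeat apply Cmul_nz; auto using two_nz.
  - unfold fmap, gmap, hmap, Cscale; simpl. f_equal.
    + transitivity (Cadd (Cmul (Cmul four (Cmul x1 (Cmul x2 x3))) x1) (Cmul R0 (Cmul x1 x1))).
      unfold R0, four; ring. rewrite Hr; ring.
    + transitivity (Cadd (Cmul (Cmul four (Cmul x1 (Cmul x2 x3))) x2) (Cmul R0 (Cmul x2 x2))).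
      unfold R0, four; ring. rewrite Hr; ring.
    + transitivity (Cadd (Cmul (Cmul four (Cmul x1 (Cmul x2 x3))) x3) (Cmul R0 (Cmul x3 x3))).
      unfold R0, four; ring. rewrite Hr; ring.
Qed.


Definition l1C (x : V3 CC) := Cadd (Cadd (Copp (v1 x)) (v2 x)) (v3 x).
Definition l2C (x : V3 CC) := Cadd (Csub (v1 x) (v2 x)) (v3 x).
Definition l3C (x : V3 CC) := Csub (Cadd (v1 x) (v2 x)) (v3 x).

Lemma onA1_iff p : onA1 p <-> l1C p = C0.
Proof. unfold onA1, onLine. replace (det3 p a2 a3) with (l1C p). tauto.
  destruct p; unfold det3, l1C, a2, a3; simpl; ring. Qed.
Lemma onA2_iff p : onA2 p <-> l2C p = C0.
Proof. unfold onA2, onLine. replace (det3 p a1 a3) with (Copp (l2C p)).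
  split; intro H. transitivity (Copp (Copp (l2C p))). ring. rewrite H; ring. rewrite H; ring.
  destruct p; unfold det3, l2C, a1, a3; simpl; ring. Qed.
Lemma onA3_iff p : onA3 p <-> l3C p = C0.
Proof. unfold onA3, onLine. replace (det3 p a1 a2) with (l3C p). tauto.
  destruct p; unfold det3, l3C, a1, a2; simpl; ring. Qed.

Definition l1R (x : V3 R) := - v1 x + v2 x + v3 x.
Definition l2R (x : V3 R) := v1 x - v2 x + v3 x.
Definition l3R (x : V3 R) := v1 x + v2 x - v3 x.
Definition hR (x : V3 R) : V3 R := mkV (v1 x * l1R x) (v2 x * l2R x) (v3 x * l3R x).
Definition fR (x : V3 R) : V3 R :=
  mkV (v1 (hR x) * v1 (hR x)) (v2 (hR x) * v2 (hR x)) (v3 (hR x) * v3 (hR x)).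

Lemma rho_fR x : rhoR (fR x) = rhoR x * ((l1R x * l2R x * l3R x) * (l1R x * l2R x * l3R x)).
Proof. destruct x; unfold rhoR, fR, hR, l1R, l2R, l3R; simpl; ring. Qed.

Lemma fmap_RtoV x : fmap (RtoV x) = RtoV (fR x).
Proof. destruct x as [a b c]; unfold fmap, gmap, hmap, RtoV, fR, hR, l1R, l2R, l3R; simpl.
  f_equal; apply Ceq; unfold Cmul, Cadd, Copp, Csub, RtoC; simpl; ring. Qed.

Definition C4 (c : CC) := Cmul (Cmul c c) (Cmul c c).
Lemma fmap_scale c x : fmap (Cscale c x) = Cscale (C4 c) (fmap x).
Proof. destruct x; unfold fmap, gmap, hmap, Cscale, C4; simpl; f_equal; ring. Qed.

Lemma C4_nz c : c <> C0 -> C4 c <> C0.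
Proof. intros; unfold C4; repeat apply Cmul_nz; auto. Qed.



Lemma part3a p : ~ onA1 p -> ~ onA2 p -> ~ onA3 p -> inU p -> inU (fmap p).
Proof.
  rewrite onA1_iff, onA2_iff, onA3_iff. intros N1 N2 N3 [x [Hx0 [[c [Hc E]] Hr]]].
  subst p.
  assert (L1 : l1R x <> 0).
  { intro H; apply N1. transitivity (Cmul c (RtoC (l1R x))).
    destruct x; unfold l1C, l1R, Cscale, RtoV; simpl; rewrite RtoC_add, RtoC_add, RtoC_opp; ring.
    rewrite H, RtoC_0; ring. }
  assert (L2 : l2R x <> 0).
  { intro H; apply N2. transitivity (Cmul c (RtoC (l2R x))).
    destruct x; unfold l2C, l2R, Cscale, RtoV; simpl; rewrite RtoC_add, RtoC_sub; ring.
    rewrite H, RtoC_0; ring. }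
  assert (L3 : l3R x <> 0).
  { intro H; apply N3. transitivity (Cmul c (RtoC (l3R x))).
    destruct x; unfold l3C, l3R, Cscale, RtoV; simpl; rewrite RtoC_sub, RtoC_add; ring.
    rewrite H, RtoC_0; ring. }
  assert (Hf : rhoR (fR x) < 0).
  { rewrite rho_fR. assert (0 < (l1R x * l2R x * l3R x) * (l1R x * l2R x * l3R x)).
    { assert (l1R x * l2R x * l3R x <> 0) by (repeat apply Rmult_integral_contrapositive_currified; auto).
      nra. }
    nra. }
  exists (fR x). split; [|split].
  - intro H. rewrite H in Hf. unfold rhoR in Hf; simpl in Hf. lra.
  - exists (C4 c). split. apply C4_nz; auto. rewrite fmap_scale, fmap_RtoV. reflexivity.
  - exact Hf.
Qed.


Definition half := Cinv (Cadd C1 C1).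

Lemma recon (L1 n1 n2 n3 : CC) : n1 <> C0 -> n2 <> C0 -> n3 <> C0 ->
 mkV (Cmul half (Cadd (Cmul L1 (Cmul n1 (Cinv n2))) (Cmul L1 (Cmul n1 (Cinv n3)))))
     (Cmul half (Cadd L1 (Cmul L1 (Cmul n1 (Cinv n3)))))
     (Cmul half (Cadd L1 (Cmul L1 (Cmul n1 (Cinv n2))))) =
 Cscale (Cmul L1 (Cinv (Cmul (Cadd C1 C1) (Cmul n2 n3))))
   (mkV (Cadd (Cmul n1 n3) (Cmul n1 n2)) (Cadd (Cmul n2 n3) (Cmul n1 n2)) (Cadd (Cmul n2 n3) (Cmul n1 n3))).
Proof. intros. pose proof two_nz. unfold Cscale, half; simpl; f_equal; field; auto. Qed.

Lemma Cmul_reg (w a b : CC) : w <> C0 -> Cmul w a = Cmul w b -> a = b.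
Proof. intros Hw E. transitivity (Cmul (Cinv w) (Cmul w a)). field; auto.
  rewrite E. field; auto. Qed.

Lemma part3b p : p <> V0 -> l1C p <> C0 -> l2C p <> C0 -> l3C p <> C0 -> inU (fmap p) -> inU p.
Proof.
  intros Hp N1 N2 N3 [y [Hy0 [[c [Hc E]] Hry]]].
  destruct y as [y1 y2 y3]. unfold rhoR in Hry; simpl in Hry.
  assert (P12 : y1 * y2 > 0) by (assert (H:=pow2_ge_0 (y1+y2-y3)); nra).
  assert (P13 : y1 * y3 > 0) by (assert (H:=pow2_ge_0 (y1+y3-y2)); nra).
  assert (Y1 : y1 <> 0) by (intro; subst; lra).
  set (w := hmap p).
  assert (Ew1 : Cmul (v1 w) (v1 w) = Cmul c (RtoC y1)) by (apply (f_equal v1) in E; exact E).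
  assert (Ew2 : Cmul (v2 w) (v2 w) = Cmul c (RtoC y2)) by (apply (f_equal v2) in E; exact E).
  assert (Ew3 : Cmul (v3 w) (v3 w) = Cmul c (RtoC y3)) by (apply (f_equal v3) in E; exact E).
  assert (W0 : v1 w <> C0).
  { intro H. rewrite H in Ew1. apply (Cmul_nz c (RtoC y1)); auto using RtoC_nz. rewrite <- Ew1; ring. }
  assert (RY1 : RtoC y1 <> C0) by (apply RtoC_nz; auto).
  assert (Sq : forall z yz, Cmul z z = Cmul c (RtoC yz) -> y1 * yz > 0 ->
             v2 w = v2 w -> exists r, z = Cmul (v1 w) (RtoC r)).
  { intros z yz Hz Hpos _.
    set (r := Cmul z (Cinv (v1 w))).
    assert (Hr : Cmul r r = RtoC (yz / y1)).
    { transitivity (Cmul (Cmul z z) (Cinv (Cmul (v1 w) (v1 w)))). unfold r; field; auto.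
      rewrite Hz, Ew1. unfold Rdiv. rewrite RtoC_mul, <- RtoC_inv by auto. field. auto. }
    apply Csq_real in Hr.
    - exists (Re r). rewrite <- Hr. unfold r; field; auto.
    - replace (yz / y1) with ((y1 * yz) * / (y1 * y1)) by (field; auto).
      apply Rmult_lt_0_compat; [lra| apply Rinv_0_lt_compat; nra]. }
  destruct (Sq (v2 w) y2 Ew2 P12 eq_refl) as [r2 Er2].
  destruct (Sq (v3 w) y3 Ew3 P13 eq_refl) as [r3 Er3].
  set (W := v1 w) in *.
  set (L1 := l1C p). set (L2 := l2C p). set (L3 := l3C p).
  set (m1 := r2 + r3 - 1). set (m2 := 1 - r2 + r3). set (m3 := 1 + r2 - r3).
  assert (Hm1 : Cmul L2 L3 = Cmul W (RtoC m1)).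
  { transitivity (Cadd (Cadd (Copp W) (v2 w)) (v3 w)).
    unfold L2, L3, l2C, l3C, W, w, hmap; simpl; ring.
    rewrite Er2, Er3. unfold m1. rewrite RtoC_sub, RtoC_add, RtoC_1. ring. }
  assert (Hm2 : Cmul L1 L3 = Cmul W (RtoC m2)).
  { transitivity (Cadd (Csub W (v2 w)) (v3 w)).
    unfold L1, L3, l1C, l3C, W, w, hmap; simpl; ring.
    rewrite Er2, Er3. unfold m2. rewrite RtoC_add, RtoC_sub, RtoC_1. ring. }
  assert (Hm3 : Cmul L1 L2 = Cmul W (RtoC m3)).
  { transitivity (Csub (Cadd W (v2 w)) (v3 w)).
    unfold L1, L2, l1C, l2C, W, w, hmap; simpl; ring.
    rewrite Er2, Er3. unfold m3. rewrite RtoC_sub, RtoC_add, RtoC_1. ring. }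
  set (n1 := RtoC m1) in *. set (n2 := RtoC m2) in *. set (n3 := RtoC m3) in *.
  assert (Nn1 : n1 <> C0).
  { intro H. rewrite H in Hm1. apply (Cmul_nz L2 L3); auto. rewrite Hm1; ring. }
  assert (Nn2 : n2 <> C0).
  { intro H. rewrite H in Hm2. apply (Cmul_nz L1 L3); auto. rewrite Hm2; ring. }
  assert (Nn3 : n3 <> C0).
  { intro H. rewrite H in Hm3. apply (Cmul_nz L1 L2); auto. rewrite Hm3; ring. }
  assert (R12 : Cmul L1 n1 = Cmul L2 n2).
  { apply (Cmul_reg W); auto. transitivity (Cmul L1 (Cmul W n1)). ring. rewrite <- Hm1.
    transitivity (Cmul L2 (Cmul L1 L3)). ring. rewrite Hm2. ring. }
  assert (R13 : Cmul L1 n1 = Cmul L3 n3).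
  { apply (Cmul_reg W); auto. transitivity (Cmul L1 (Cmul W n1)). ring. rewrite <- Hm1.
    transitivity (Cmul L3 (Cmul L1 L2)). ring. rewrite Hm3. ring. }
  assert (E2 : L2 = Cmul L1 (Cmul n1 (Cinv n2))).
  { transitivity (Cmul (Cmul L2 n2) (Cinv n2)). field; auto. rewrite <- R12. field; auto. }
  assert (E3 : L3 = Cmul L1 (Cmul n1 (Cinv n3))).
  { transitivity (Cmul (Cmul L3 n3) (Cinv n3)). field; auto. rewrite <- R13. field; auto. }
  assert (Ep : p = mkV (Cmul half (Cadd L2 L3)) (Cmul half (Cadd L1 L3)) (Cmul half (Cadd L1 L2))).
  { pose proof two_nz. unfold L1, L2, L3, l1C, l2C, l3C, half. destruct p; simpl; f_equal; field; auto. }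
  rewrite E2, E3, recon in Ep by auto.
  set (q := mkV (m1 * m3 + m1 * m2) (m2 * m3 + m1 * m2) (m2 * m3 + m1 * m3)).
  set (k := Cmul L1 (Cinv (Cmul (Cadd C1 C1) (Cmul n2 n3)))) in Ep.
  assert (Eq : p = Cscale k (RtoV q)).
  { rewrite Ep at 1. f_equal. unfold RtoV, q; simpl. rewrite !RtoC_add, !RtoC_mul. reflexivity. }
  clear Ep.
  assert (Hk : k <> C0).
  { intro H. apply Hp. rewrite Eq, H. unfold Cscale, V0; f_equal; ring. }
  assert (Hq : q <> mkV 0 0 0).
  { intro H. apply Hp. rewrite Eq, H. unfold Cscale, V0, RtoV; simpl; rewrite RtoC_0; f_equal; ring. }
  exists q. split; [exact Hq|split].
  - exists k. split; auto.
  - rewrite Eq, fmap_scale, fmap_RtoV in E.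
    set (s := Cmul c (Cinv (C4 k))).
    assert (Hk4 : C4 k <> C0) by (apply C4_nz; auto).
    assert (Hs : s <> C0).
    { intro H. apply Hc. transitivity (Cmul s (C4 k)). unfold s; field; auto. rewrite H; ring. }
    destruct (fR q) as [f1 f2 f3] eqn:Ef.
    assert (F1 : RtoC f1 = Cmul s (RtoC y1)).
    { apply (f_equal v1) in E; simpl in E. apply (Cmul_reg (C4 k)); auto. rewrite E. unfold s; field; auto. }
    assert (F2 : RtoC f2 = Cmul s (RtoC y2)).
    { apply (f_equal v2) in E; simpl in E. apply (Cmul_reg (C4 k)); auto. rewrite E. unfold s; field; auto. }
    assert (F3 : RtoC f3 = Cmul s (RtoC y3)).
    { apply (f_equal v3) in E; simpl in E. apply (Cmul_reg (C4 k)); auto. rewrite E. unfold s; field; auto. }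
    clearbody s. destruct s as [sr si].
    assert (Si : si = 0).
    { apply (f_equal Im) in F1. simpl in F1. assert (si * y1 = 0) by lra.
      destruct (Rmult_integral _ _ H); auto. contradiction. }
    subst si.
    assert (Sr : sr <> 0) by (intro Hsr; rewrite Hsr in Hs; apply Hs; reflexivity).
    apply (f_equal Re) in F1, F2, F3. simpl in F1, F2, F3.
    assert (Hfr : rhoR (fR q) < 0).
    { rewrite Ef. unfold rhoR; simpl.
      replace f1 with (sr * y1) by lra. replace f2 with (sr * y2) by lra. replace f3 with (sr * y3) by lra.
      assert (0 < sr * sr) by nra. nra. }
    rewrite rho_fR in Hfr.
    set (L := l1R q * l2R q * l3R q) in Hfr.
    assert (0 <= L * L) by nra. nra.
Qed.


Definition E1 (V Y : V3 CC) :=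
  Csub (Cmul (rhoC Y) (Cmul (Cmul (v2 V) (v2 V)) (Cmul (v3 V) (v3 V))))
       (Cmul (Cmul (rhoC V) (Cmul (l1C V) (l1C V))) (Cmul (v2 Y) (v3 Y))).

Lemma E1_zero c d x : E1 (Cscale d x) (Cscale c (fmap x)) = C0.
Proof. destruct x. unfold E1, rhoC, l1C, Cscale, fmap, gmap, hmap; simpl. rewrite RtoC_2. ring. Qed.

Lemma E1_cont V Y p y : V3cv V p -> V3cv Y y -> Ccv (fun n => E1 (V n) (Y n)) (E1 p y).
Proof. intros [A1 [A2 A3]] [B1 [B2 B3]]. unfold E1, rhoC, l1C. ccv. Qed.

Lemma a1_fwd k y : k <> C0 -> limit_set (Cscale k a1) y -> inQ y.
Proof.
  intros Hk [u [_ [[_ [_ [d [_ Hd]]]] [Hy0 [_ [c [_ Hc]]]]]]].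
  split; auto.
  pose proof (E1_cont _ _ _ _ Hd Hc) as H.
  assert (H0 : Ccv (fun n => E1 (Cscale (d n) (u n)) (Cscale (c n) (fmap (u n)))) C0).
  { eapply Ccv_ext. intro n. apply E1_zero. apply Ccv_const. }
  pose proof (Ccv_unique _ _ _ H H0) as Z.
  assert (Z2 : Cmul (rhoC y) (Cmul (Cmul k k) (Cmul k k)) = C0).
  { rewrite <- Z. unfold E1, rhoC, l1C, Cscale, a1; simpl. rewrite RtoC_2. ring. }
  destruct (Cmul_integral _ _ Z2) as [|Z3]; auto.
  exfalso. apply (Cmul_nz (Cmul k k) (Cmul k k)); auto; apply Cmul_nz; auto.
Qed.


Lemma roots_Q y : inQ y -> exists B C, Cmul B B = v2 y /\ Cmul C C = v3 y /\ Cmul (Cadd B C) (Cadd B C) = v1 y.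
Proof.
  intros [_ Hr]. destruct (Csqrt_ex (v2 y)) as [B HB]. destruct (Csqrt_ex (v3 y)) as [C HC].
  destruct y as [y1 y2 y3]; simpl in *. unfold rhoC in Hr; simpl in Hr. rewrite RtoC_2 in Hr.
  subst y2 y3.
  assert (Z : Cmul (Csub (Csub (Csub y1 (Cmul B B)) (Cmul C C)) (Cmul (Cadd C1 C1) (Cmul B C)))
                   (Cadd (Csub (Csub y1 (Cmul B B)) (Cmul C C)) (Cmul (Cadd C1 C1) (Cmul B C))) = C0).
  { rewrite <- Hr. ring. }
  destruct (Cmul_integral _ _ Z) as [Z1|Z1].
  - exists B, C. split; [|split]; auto.
    transitivity (Cadd y1 (Copp (Csub (Csub (Csub y1 (Cmul B B)) (Cmul C C)) (Cmul (Cadd C1 C1) (Cmul B C))))).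
    ring. rewrite Z1; ring.
  - exists B, (Copp C). split; [|split]; auto. ring.
    transitivity (Cadd y1 (Copp (Cadd (Csub (Csub y1 (Cmul B B)) (Cmul C C)) (Cmul (Cadd C1 C1) (Cmul B C))))).
    ring. rewrite Z1; ring.
Qed.

Lemma inv_cv K : 1 <= K -> Un_cv (fun n => / (INR n + K)) 0.
Proof.
  intros HK eps He. destruct (archimed_cor1 eps He) as [N [HN HN0]].
  exists N. intros n Hn. unfold R_dist. rewrite Rminus_0_r.
  assert (0 < INR N) by (apply lt_0_INR; auto).
  assert (INR N <= INR n) by (apply le_INR; lia).
  assert (0 < INR n + K) by lra.
  rewrite Rabs_right by (left; apply Rinv_0_lt_compat; lra).
  apply Rle_lt_trans with (/ INR N); auto. apply Rinv_le_contravar; lra.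
Qed.

Lemma four_nz : four <> C0. Proof. apply Cmul_nz; apply two_nz. Qed.

Lemma a1_bwd k y : k <> C0 -> inQ y -> limit_set (Cscale k a1) y.
Proof.
  intros Hk HQ. destruct (roots_Q y HQ) as [B [C [HB [HC HBC]]]].
  destruct HQ as [Hy0 _].
  set (K := Rabs (Re B) + Rabs (Re C) + 1).
  assert (HK : 1 <= K) by (unfold K; pose proof (Rabs_pos (Re B)); pose proof (Rabs_pos (Re C)); lra).
  set (T := fun n : nat => RtoC (INR n + K)).
  assert (TC : forall n, Cadd (T n) C <> C0).
  { intros n E. apply (f_equal Re) in E. simpl in E. pose proof (pos_INR n).
    pose proof (Rabs_pos (Re B)). pose proof (Rle_abs (- Re C)) as HA. rewrite Rabs_Ropp in HA. unfold K in E. lra. }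
  assert (TB : forall n, Cadd (T n) B <> C0).
  { intros n E. apply (f_equal Re) in E. simpl in E. pose proof (pos_INR n).
    pose proof (Rabs_pos (Re C)). pose proof (Rle_abs (- Re B)) as HA. rewrite Rabs_Ropp in HA. unfold K in E. lra. }
  assert (T0 : forall n, T n <> C0).
  { intros n. unfold T. apply RtoC_nz. pose proof (pos_INR n). lra. }
  assert (BC0 : B = C0 -> C = C0 -> False).
  { intros E1 E2. apply Hy0. destruct y; simpl in *. subst B C.
    unfold V0; f_equal; [rewrite <- HBC|rewrite <- HB|rewrite <- HC]; ring. }
  set (e := fun n => Cinv (T n)).
  assert (He : Ccv e C0).
  { apply (Ccv_ext _ (fun n => RtoC (/ (INR n + K)))).
    intro n. unfold e, T. apply RtoC_inv. pose proof (pos_INR n). lra.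
    split. apply (inv_cv K HK). simpl. apply (Ccv_const C0). }
  set (u := fun n => mkV (Cadd B C) (Cadd (T n) C) (Cadd (T n) B)).
  exists u. split; [|split].
  -
    intros n [[c [Hc E]]|[[c [Hc E]]|[c [Hc E]]]].
    + pose proof (f_equal v1 E) as E1; pose proof (f_equal v2 E) as E2; pose proof (f_equal v3 E) as E3; unfold u, Cscale, a1 in E1, E2, E3; simpl in E1, E2, E3.
      assert (BC : B = C).
      { transitivity (Csub (Cadd (T n) B) (T n)). ring. rewrite E3, <- E2. ring. }
      subst C. apply BC0; auto.
      apply (Cmul_reg (Cadd C1 C1)). apply two_nz. transitivity (Cadd B B). ring. rewrite E1. ring.
      apply (Cmul_reg (Cadd C1 C1)). apply two_nz. transitivity (Cadd B B). ring. rewrite E1. ring.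
    + pose proof (f_equal v1 E) as E1; pose proof (f_equal v2 E) as E2; pose proof (f_equal v3 E) as E3; unfold u, Cscale, a2 in E1, E2, E3; simpl in E1, E2, E3.
      apply (TC n). rewrite E2. ring.
    + pose proof (f_equal v1 E) as E1; pose proof (f_equal v2 E) as E2; pose proof (f_equal v3 E) as E3; unfold u, Cscale, a3 in E1, E2, E3; simpl in E1, E2, E3.
      apply (TB n). rewrite E3. ring.
  - split; [|split].
    + intro E. apply (f_equal v2) in E. unfold Cscale, a1, V0 in E; simpl in E.
      apply Hk. rewrite <- E. ring.
    + intros n E. apply (f_equal v2) in E. apply (TC n). exact E.
    + exists (fun n => Cmul k (e n)). split.
      * intro n. apply Cmul_nz; auto. unfold e. intro E.
        apply C1_neq_C0. transitivity (Cmul (T n) (Cinv (T n))). field; auto. rewrite E; ring.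
      * split; [|split].
        -- apply (Ccv_lim _ (Cmul k (Cmul C0 (Cadd B C)))). apply (Ccv_ext _ (fun n => Cmul k (Cmul (e n) (Cadd B C)))).
           intro n; unfold u, Cscale; simpl; ring. ccv. unfold Cscale, a1; simpl; ring.
        -- apply (Ccv_lim _ (Cmul k (Cadd C1 (Cmul C0 C)))). apply (Ccv_ext _ (fun n => Cmul k (Cadd C1 (Cmul (e n) C)))).
           intro n; unfold u, Cscale, e; simpl. field. auto. ccv. unfold Cscale, a1; simpl; ring.
        -- apply (Ccv_lim _ (Cmul k (Cadd C1 (Cmul C0 B)))). apply (Ccv_ext _ (fun n => Cmul k (Cadd C1 (Cmul (e n) B)))).
           intro n; unfold u, Cscale, e; simpl. field. auto. ccv. unfold Cscale, a1; simpl; ring.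
  - assert (F1 : forall n, v1 (fmap (u n)) = Cmul four (Cmul (Cmul (Cadd B C) (T n)) (Cmul (Cadd B C) (T n)))).
    { intro n. unfold u, fmap, gmap, hmap, four; simpl. ring. }
    assert (F2 : forall n, v2 (fmap (u n)) = Cmul four (Cmul (Cmul B (Cadd (T n) C)) (Cmul B (Cadd (T n) C)))).
    { intro n. unfold u, fmap, gmap, hmap, four; simpl. ring. }
    assert (F3 : forall n, v3 (fmap (u n)) = Cmul four (Cmul (Cmul C (Cadd (T n) B)) (Cmul C (Cadd (T n) B)))).
    { intro n. unfold u, fmap, gmap, hmap, four; simpl. ring. }
    pose proof four_nz as H4.
    split; [exact Hy0|split].
    + intros n E. apply BC0.
      * pose proof (f_equal v2 E) as E2. rewrite F2 in E2. simpl in E2.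
        destruct (Cmul_integral _ _ E2) as [|E2']. contradiction.
        apply Csq_zero in E2'. destruct (Cmul_integral _ _ E2') as [|E2'']; auto. exfalso; apply (TC n); auto.
      * pose proof (f_equal v3 E) as E3. rewrite F3 in E3. simpl in E3.
        destruct (Cmul_integral _ _ E3) as [|E3']. contradiction.
        apply Csq_zero in E3'. destruct (Cmul_integral _ _ E3') as [|E3'']; auto. exfalso; apply (TB n); auto.
    + exists (fun n => Cmul (Cinv four) (Cmul (e n) (e n))). split.
      * intro n. assert (Ei : forall z, z <> C0 -> Cinv z <> C0).
        { intros z Hz E. apply C1_neq_C0. transitivity (Cmul z (Cinv z)). field; auto. rewrite E; ring. }
        apply Cmul_nz. apply Ei; auto. apply Cmul_nz; apply Ei; auto.
      * split; [|split].
        -- apply (Ccv_lim _ (Cmul (Cadd B C) (Cadd B C))); auto.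
           apply (Ccv_ext _ (fun _ => Cmul (Cadd B C) (Cadd B C))). intro n. unfold Cscale; cbn [v1 v2 v3].
           rewrite F1. unfold e. field. split; auto. apply Ccv_const.
        -- apply (Ccv_lim _ (Cmul (Cmul B B) (Cmul (Cadd C1 (Cmul C0 C)) (Cadd C1 (Cmul C0 C))))).
           apply (Ccv_ext _ (fun n => Cmul (Cmul B B) (Cmul (Cadd C1 (Cmul (e n) C)) (Cadd C1 (Cmul (e n) C))))).
           intro n. unfold Cscale; cbn [v1 v2 v3]. rewrite F2. unfold e. field. split; auto. ccv.
           rewrite <- HB; ring.
        -- apply (Ccv_lim _ (Cmul (Cmul C C) (Cmul (Cadd C1 (Cmul C0 B)) (Cadd C1 (Cmul C0 B))))).
           apply (Ccv_ext _ (fun n => Cmul (Cmul C C) (Cmul (Cadd C1 (Cmul (e n) B)) (Cadd C1 (Cmul (e n) B))))).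
           intro n. unfold Cscale; cbn [v1 v2 v3]. rewrite F3. unfold e. field. split; auto. ccv.
           rewrite <- HC; ring.
Qed.


Definition sw12 (x : V3 CC) := mkV (v2 x) (v1 x) (v3 x).
Definition sw13 (x : V3 CC) := mkV (v3 x) (v2 x) (v1 x).

Lemma V3cv_ext u w y : (forall n, u n = w n) -> V3cv w y -> V3cv u y.
Proof. intros E [A [B C]]. split; [|split]; eapply Ccv_ext; eauto; intro n; rewrite E; reflexivity. Qed.

Lemma limit_sw (sw : V3 CC -> V3 CC)
  (HK : forall x, sw (sw x) = x)
  (Hs : forall c x, sw (Cscale c x) = Cscale c (sw x))
  (Hf : forall x, fmap (sw x) = sw (fmap x))
  (HV : forall x, sw x = V0 -> x = V0)
  (Hc : forall u y, V3cv u y -> V3cv (fun n => sw (u n)) (sw y))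
  (HI : forall x, inI x -> inI (sw x)) :
  forall p y, limit_set p y -> limit_set (sw p) (sw y).
Proof.
  intros p y [u [Hu [[Hp [Hu0 [d [Hd Hdc]]]] [Hy [Hfu0 [c [Hc0 Hcc]]]]]]].
  exists (fun n => sw (u n)). split; [|split].
  - intros n H. apply HI in H. rewrite HK in H. eapply Hu; eauto.
  - split; [|split].
    + intro H; apply Hp, HV; auto.
    + intros n H; apply (Hu0 n), HV; auto.
    + exists d. split; auto. eapply V3cv_ext; [|apply (Hc _ _ Hdc)]. intro n; simpl. rewrite Hs; reflexivity.
  - split; [|split].
    + intro H; apply Hy, HV; auto.
    + intros n H; apply (Hfu0 n), HV. rewrite <- Hf. auto.
    + exists c. split; auto. eapply V3cv_ext; [|apply (Hc _ _ Hcc)]. intro n; simpl. rewrite Hf, Hs; reflexivity.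
Qed.

Lemma inQ_sw (sw : V3 CC -> V3 CC) (HV : forall x, sw x = V0 -> x = V0)
  (Hr : forall x, rhoC (sw x) = rhoC x) y : inQ y -> inQ (sw y).
Proof. intros [H1 H2]; split. intro H; apply H1, HV; auto. rewrite Hr; auto. Qed.

Ltac swt := intros; repeat match goal with x : V3 CC |- _ => destruct x end;
  unfold sw12, sw13, Cscale, fmap, gmap, hmap, rhoC, V0 in *; simpl in *; try (f_equal; ring).

Lemma sw12_K x : sw12 (sw12 x) = x. Proof. destruct x; reflexivity. Qed.
Lemma sw13_K x : sw13 (sw13 x) = x. Proof. destruct x; reflexivity. Qed.
Lemma sw12_s c x : sw12 (Cscale c x) = Cscale c (sw12 x). Proof. destruct x; reflexivity. Qed.
Lemma sw13_s c x : sw13 (Cscale c x) = Cscale c (sw13 x). Proof. destruct x; reflexivity. Qed.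
Lemma sw12_f x : fmap (sw12 x) = sw12 (fmap x). Proof. swt. Qed.
Lemma sw13_f x : fmap (sw13 x) = sw13 (fmap x). Proof. swt. Qed.
Lemma sw12_r x : rhoC (sw12 x) = rhoC x. Proof. swt; rewrite ?RtoC_2; ring. Qed.
Lemma sw13_r x : rhoC (sw13 x) = rhoC x. Proof. swt; rewrite ?RtoC_2; ring. Qed.
Lemma sw12_V x : sw12 x = V0 -> x = V0.
Proof. intro H. rewrite <- (sw12_K x), H. reflexivity. Qed.
Lemma sw13_V x : sw13 x = V0 -> x = V0.
Proof. intro H. rewrite <- (sw13_K x), H. reflexivity. Qed.
Lemma sw12_c u y : V3cv u y -> V3cv (fun n => sw12 (u n)) (sw12 y).
Proof. intros [A [B C]]; split; [|split]; auto. Qed.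
Lemma sw13_c u y : V3cv u y -> V3cv (fun n => sw13 (u n)) (sw13 y).
Proof. intros [A [B C]]; split; [|split]; auto. Qed.
Lemma sw12_I x : inI x -> inI (sw12 x).
Proof. intros [[c [Hc E]]|[[c [Hc E]]|[c [Hc E]]]]; subst x.
  - right; left. exists c; split; auto.
  - left. exists c; split; auto.
  - right; right. exists c; split; auto. Qed.
Lemma sw13_I x : inI x -> inI (sw13 x).
Proof. intros [[c [Hc E]]|[[c [Hc E]]|[c [Hc E]]]]; subst x.
  - right; right. exists c; split; auto.
  - right; left. exists c; split; auto.
  - left. exists c; split; auto. Qed.

Lemma part1 : forall p : V3 CC, inI p -> forall y : V3 CC, limit_set p y <-> inQ y.
Proof.
  pose proof (limit_sw sw12 sw12_K sw12_s sw12_f sw12_V sw12_c sw12_I) as L12.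
  pose proof (limit_sw sw13 sw13_K sw13_s sw13_f sw13_V sw13_c sw13_I) as L13.
  pose proof (inQ_sw sw12 sw12_V sw12_r) as Q12.
  pose proof (inQ_sw sw13 sw13_V sw13_r) as Q13.
  intros p [[k [Hk E]]|[[k [Hk E]]|[k [Hk E]]]] y; subst p; split.
  - apply a1_fwd; auto.
  - apply a1_bwd; auto.
  - intro H. apply L12 in H. rewrite <- (sw12_K y). apply Q12. apply (a1_fwd k); auto.
  - intro H. apply Q12 in H. apply (a1_bwd k) in H; auto. apply L12 in H. rewrite sw12_K in H. exact H.
  - intro H. apply L13 in H. rewrite <- (sw13_K y). apply Q13. apply (a1_fwd k); auto.
  - intro H. apply Q13 in H. apply (a1_bwd k) in H; auto. apply L13 in H. rewrite sw13_K in H. exact H.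
Qed.


Theorem mainTheorem15 :
  (* (1) f(a_j) = Q for each a_j in I(f) *)
  (forall p : V3 CC, inI p ->
     forall y : V3 CC, limit_set p y <-> inQ y) /\
  (* (2) f(p) = p for p in Q \ I(f) *)
  (forall p : V3 CC, inQ p -> ~ inI p -> proj_eq p (fmap p)) /\
  (* (3) for p in P^2 \ (A1 u A2 u A3): p in U <-> f(p) in U *)
  (forall p : V3 CC, p <> V0 -> ~ onA1 p -> ~ onA2 p -> ~ onA3 p ->
     (inU p <-> inU (fmap p))).
Proof.
  split; [exact part1|split; [exact part2|]].
  intros p Hp N1 N2 N3. split.
  - apply part3a; auto.
  - apply part3b; auto.
    + intro H; apply N1; apply onA1_iff; auto.
    + intro H; apply N2; apply onA2_iff; auto.
    + intro H; apply N3; apply onA3_iff; auto.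
Qed.
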